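(* Let $\epsilon\in(0,1)$, $u_0\in\mathbb{R}$, $h>0$, and let $(u_n)_{n\ge0}$ be a sequence of real numbers starting at $u_0$ and satisfying the convex-splitting modified Crank–Nicolson scheme $$\frac{u_n-u_{n-1}}{h}+\frac{1}{\epsilon^2}\left(\frac{u_n+u_{n-1}}{2}\right)\left(\frac{u_n^2+u_{n-1}^2}{2}\right)-\frac{1}{\epsilon^2}u_{n-1}=0,\qquad n\ge1.$$ (i) If $u_0\in\{0,1,-1\}$, then $u_n=\mathrm{sign}(u_0)$ for all $n\ge1$, for any $h>0$ and any $\epsilon$. (ii) If $u_0\notin\{0,1,-1\}$, define $h^*=h^*(u_0,\epsilon)=\frac{4\epsilon^2}{u_0^2+2|u_0|-1}$ if $|u_0|>1$ and $h^*=2\epsilon^2$ if $0<|u_0|<1$. Then $h^*>0$ and for every $h\in(0,h^*]$ the sequence $(u_n)$ is monotone and converges to $\mathrm{sign}(u_0)$ as $n\to\infty$.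
   Context: The scheme discretizes the ODE $u'(t)+\frac{1}{\epsilon^2}(u^3-u)=0$, $u(0)=u_0$. For every $h>0$ each step equation has a unique real solution $u_n$. Here $\mathrm{sign}(0)=0$. *)

(* Defs.v *)
From Stdlib Require Import Reals.
Open Scope R_scope.

Definition sign (x : R) : R :=
  if Rlt_dec 0 x then 1 else if Rlt_dec x 0 then -1 else 0.

Definition cs_mcn_step (eps h a b : R) : Prop :=
  (b - a) / h + / eps ^ 2 * ((b + a) / 2) * ((b ^ 2 + a ^ 2) / 2)
    - / eps ^ 2 * a = 0.

Definition cs_mcn_seq (eps h : R) (u : nat -> R) : Prop :=
  forall n : nat, cs_mcn_step eps h (u n) (u (S n)).

Definition hstar (u0 eps : R) : R :=
  if Rlt_dec 1 (Rabs u0) then 4 * eps ^ 2 / (u0 ^ 2 + 2 * Rabs u0 - 1)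
  else 2 * eps ^ 2.

Definition monotone_seq (u : nat -> R) : Prop :=
  Un_growing u \/ Un_decreasing u.

(* Main.v *)
Require Import Defs.
From Stdlib Require Import Reals Lra Lia Psatz.
Open Scope R_scope.

Definition G (k a b : R) : R := b - a + k/4*(b+a)*(b*b+a*a) - k*a.

Lemma step_G eps h a b : 0 < eps -> 0 < h -> cs_mcn_step eps h a b -> G (h/eps^2) a b = 0.
Proof.
  unfold cs_mcn_step, G; intros He Hh H.
  replace (b - a + h / eps ^ 2 / 4 * (b + a) * (b * b + a * a) - h / eps ^ 2 * a)
    with (h * ((b - a) / h + / eps ^ 2 * ((b + a) / 2) * ((b ^ 2 + a ^ 2) / 2) - / eps ^ 2 * a))
    by (field; lra).
  rewrite H; ring.
Qed.

Lemma G_diff k a b c : G k a b - G k a c =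
  (b - c) * (1 + k/4 * (b*b+b*c+c*c+a*b+a*c+a*a)).
Proof. unfold G; field. Qed.

Lemma Q_nonneg a b c : 0 <= b*b+b*c+c*c+a*b+a*c+a*a.
Proof.
  replace (b*b+b*c+c*c+a*b+a*c+a*a) with (/2*((a+b)*(a+b)+(b+c)*(b+c)+(a+c)*(a+c))) by field.
  assert (0 <= (a+b)*(a+b)) by apply Rle_0_sqr.
  assert (0 <= (b+c)*(b+c)) by apply Rle_0_sqr.
  assert (0 <= (a+c)*(a+c)) by apply Rle_0_sqr.
  lra.
Qed.

Lemma G_mono k a b c : 0 < k -> G k a b = 0 ->
  (0 <= G k a c -> b <= c) /\ (0 < G k a c -> b < c) /\
  (G k a c <= 0 -> c <= b) /\ (G k a c < 0 -> c < b).
Proof.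
  intros Hk H0. pose proof (G_diff k a b c) as D. pose proof (Q_nonneg a b c) as Q.
  set (q := b*b+b*c+c*c+a*b+a*c+a*a) in *.
  assert (P : 0 < 1 + k/4*q) by (assert (0 <= k/4*q) by (apply Rmult_le_pos; lra); lra).
  rewrite H0 in D.
  repeat split; intro Hc.
  - destruct (Rle_or_lt b c); auto. nra.
  - destruct (Rlt_or_le b c); auto. nra.
  - destruct (Rle_or_lt c b); auto. nra.
  - destruct (Rlt_or_le c b); auto. nra.
Qed.

Lemma G_aa k a : G k a a = k * a * (a*a - 1).
Proof. unfold G; field. Qed.
Lemma G_a1 k a : G k a 1 = (1 - a) * (1 - k/4*(a*a+2*a-1)).
Proof. unfold G; field. Qed.
Lemma G_opp k a b : G k (-a) (-b) = - G k a b.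
Proof. unfold G; field. Qed.

Lemma stepA k a b : 0 < k -> k <= 2 -> 0 < a < 1 -> G k a b = 0 -> a <= b /\ 0 < b < 1.
Proof.
  intros Hk Hk2 Ha H.
  destruct (G_mono k a b a Hk H) as [_ [_ [_ H1]]].
  destruct (G_mono k a b 1 Hk H) as [_ [H2 _]].
  assert (a < b) by (apply H1; rewrite G_aa; assert (0<k*a) by nra; assert (a*a<1) by nra; nra).
  assert (b < 1).
  { apply H2; rewrite G_a1.
    assert (k/4*(a*a+2*a-1) < 1).
    { destruct (Rle_or_lt (a*a+2*a-1) 0).
      - assert (0 <= k/4) by lra. nra.
      - assert (a*a+2*a-1 < 2) by nra. nra. }
    nra. }
  lra.
Qed.

Lemma stepB k u0 a b : 0 < k -> k * (u0*u0+2*u0-1) <= 4 -> 1 <= a <= u0 -> G k a b = 0 ->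
  1 <= b <= a.
Proof.
  intros Hk Hk2 Ha H.
  destruct (G_mono k a b a Hk H) as [H1 _].
  destruct (G_mono k a b 1 Hk H) as [_ [_ [H2 _]]].
  split.
  - apply H2; rewrite G_a1.
    assert (a*a+2*a-1 <= u0*u0+2*u0-1) by nra.
    assert (k/4*(a*a+2*a-1) <= 1) by nra. nra.
  - apply H1; rewrite G_aa. assert (0<=k*a) by nra. assert (0 <= a*a-1) by nra. nra.
Qed.

Lemma cv_const c : Un_cv (fun _ => c) c.
Proof. intros e He; exists 0%nat; intros; unfold Rdist; rewrite Rminus_diag, Rabs_R0; lra. Qed.

Lemma cv_S u l : Un_cv u l -> Un_cv (fun n => u (S n)) l.
Proof. intros H e He; destruct (H e He) as [N HN]; exists N; intros; apply HN; lia. Qed.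

Lemma cv_G k x y a b : Un_cv x a -> Un_cv y b -> Un_cv (fun n => G k (x n) (y n)) (G k a b).
Proof.
  intros Hx Hy. unfold G.
  apply CV_minus; [apply CV_plus; [apply CV_minus; auto|] |].
  - apply CV_mult; [apply CV_mult; [apply cv_const| apply CV_plus; auto]|].
    apply CV_plus; apply CV_mult; auto.
  - apply CV_mult; [apply cv_const| auto].
Qed.

Lemma cv_uniq u l1 l2 : Un_cv u l1 -> Un_cv u l2 -> l1 = l2.
Proof. apply UL_sequence. Qed.

Lemma limit_fixed k u L : 0 < k -> (forall n, G k (u n) (u (S n)) = 0) -> Un_cv u L ->
  L * (L*L - 1) = 0.
Proof.
  intros Hk H HL.
  assert (C : Un_cv (fun n => G k (u n) (u (S n))) (G k L L)) by (apply cv_G; auto using cv_S).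
  assert (C0 : Un_cv (fun n => G k (u n) (u (S n))) 0).
  { intros e He; exists 0%nat; intros n _; rewrite H; unfold Rdist; rewrite Rminus_diag, Rabs_R0; lra. }
  pose proof (cv_uniq _ _ _ C C0). rewrite G_aa in H0.
  assert (k * (L * (L*L-1)) = 0) by lra.
  destruct (Rmult_integral _ _ H1); lra.
Qed.

Lemma caseA k u : 0 < k -> k <= 2 -> 0 < u 0%nat < 1 -> (forall n, G k (u n) (u (S n)) = 0) ->
  Un_growing u /\ Un_cv u 1.
Proof.
  intros Hk Hk2 H0 H.
  assert (I : forall n, 0 < u n < 1).
  { induction n; auto. destruct (stepA k _ _ Hk Hk2 IHn (H n)); auto. }
  assert (Gr : Un_growing u).
  { intro n. destruct (stepA k _ _ Hk Hk2 (I n) (H n)); auto. }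
  split; auto.
  destruct (growing_cv u Gr) as [L HL].
  { exists 1. intros x [n ->]. specialize (I n). lra. }
  pose proof (growing_ineq u L Gr HL 0%nat).
  pose proof (limit_fixed k u L Hk H HL).
  assert (L = 1) by nra. subst; auto.
Qed.

Lemma caseB k u : 0 < k -> k * (u 0%nat * u 0%nat + 2 * u 0%nat - 1) <= 4 -> 1 < u 0%nat ->
  (forall n, G k (u n) (u (S n)) = 0) ->
  Un_decreasing u /\ Un_cv u 1.
Proof.
  intros Hk Hk2 H0 H.
  assert (I : forall n, 1 <= u n <= u 0%nat).
  { induction n; [lra|]. destruct (stepB k (u 0%nat) _ _ Hk Hk2 IHn (H n)); lra. }
  assert (Gr : Un_decreasing u).
  { intro n. destruct (stepB k (u 0%nat) _ _ Hk Hk2 (I n) (H n)); auto. }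
  split; auto.
  destruct (decreasing_cv u Gr) as [L HL].
  { exists 0. intros x [n ->]. specialize (I n). unfold opp_seq. lra. }
  assert (1 <= L).
  { destruct (Rle_or_lt 1 L); auto.
    destruct (HL (1 - L)) as [N HN]; [lra|].
    specialize (HN N (le_n _)). specialize (I N). unfold Rdist in HN.
    rewrite Rabs_right in HN; lra. }
  pose proof (limit_fixed k u L Hk H HL).
  assert (L = 1) by nra. subst; auto.
Qed.

Lemma sign_pos x : 0 < x -> sign x = 1.
Proof. intro; unfold sign; destruct (Rlt_dec 0 x); lra. Qed.
Lemma sign_neg x : x < 0 -> sign x = -1.
Proof. intro; unfold sign; destruct (Rlt_dec 0 x); [lra|]; destruct (Rlt_dec x 0); lra. Qed.
Lemma sign_0 : sign 0 = 0.
Proof. unfold sign; destruct (Rlt_dec 0 0); [lra|]; destruct (Rlt_dec 0 0); lra. Qed.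

Lemma pos_case k u : 0 < k -> 0 < u 0%nat -> u 0%nat <> 1 ->
  (u 0%nat < 1 -> k <= 2) -> (1 < u 0%nat -> k * (u 0%nat * u 0%nat + 2 * u 0%nat - 1) <= 4) ->
  (forall n, G k (u n) (u (S n)) = 0) ->
  monotone_seq u /\ Un_cv u 1.
Proof.
  intros Hk H0 H1 HA HB H. unfold monotone_seq.
  destruct (Rlt_or_le (u 0%nat) 1).
  - destruct (caseA k u); auto; lra.
  - destruct (caseB k u); auto; lra.
Qed.

Theorem theorem3p10 (eps u0 : R) :
  0 < eps < 1 ->
  ((u0 = 0 \/ u0 = 1 \/ u0 = -1) ->
     forall (h : R) (u : nat -> R), 0 < h -> u 0%nat = u0 ->
       cs_mcn_seq eps h u -> forall n : nat, (1 <= n)%nat -> u n = sign u0)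
  /\
  (~ (u0 = 0 \/ u0 = 1 \/ u0 = -1) ->
     0 < hstar u0 eps /\
     forall (h : R) (u : nat -> R), 0 < h <= hstar u0 eps -> u 0%nat = u0 ->
       cs_mcn_seq eps h u ->
       monotone_seq u /\ Un_cv u (sign u0)).
Proof.
  intros Heps. split.
  - intros Hu0 h u Hh Hu Hs n _.
    set (k := h / eps^2).
    assert (Hk : 0 < k) by (unfold k; apply Rdiv_lt_0_compat; [lra| apply pow_lt; lra]).
    assert (Hg : forall n, G k (u n) (u (S n)) = 0) by (intro m; apply step_G; auto; lra).
    assert (Hsg : sign u0 = u0).
    { destruct Hu0 as [ -> | [ -> | -> ] ]; [apply sign_0|apply sign_pos; lra|apply sign_neg; lra]. }
    rewrite Hsg.
    assert (forall m, u m = u0).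
    { induction m; auto.
      destruct (G_mono k _ _ (u m) Hk (Hg m)) as [A [_ [B _]]].
      assert (G k (u m) (u m) = 0) by (rewrite G_aa, IHm; destruct Hu0 as [ -> | [ -> | -> ] ]; ring).
      rewrite <- IHm. apply Rle_antisym; [apply A|apply B]; lra. }
    auto.
  - intros Hu0.
    assert (Hn0 : u0 <> 0) by tauto. assert (Hn1 : u0 <> 1) by tauto. assert (Hn2 : u0 <> -1) by tauto.
    assert (He2 : 0 < eps^2) by (apply pow_lt; lra).
    split.
    + unfold hstar. destruct (Rlt_dec 1 (Rabs u0)).
      * apply Rdiv_lt_0_compat; [lra|]. pose proof (Rabs_pos u0). nra.
      * lra.
    + intros h u Hh Hu Hs.
      set (k := h / eps^2).
      assert (Hk : 0 < k) by (unfold k; apply Rdiv_lt_0_compat; lra).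
      assert (Hg : forall n, G k (u n) (u (S n)) = 0) by (intro m; apply step_G; auto; lra).
      assert (HA : Rabs u0 < 1 -> k <= 2).
      { intro Ha. unfold hstar in Hh. destruct (Rlt_dec 1 (Rabs u0)); [lra|].
        unfold k. apply Rmult_le_reg_r with (eps^2); auto.
        unfold Rdiv; rewrite Rmult_assoc, Rinv_l; lra. }
      assert (HB : 1 < Rabs u0 -> k * (Rabs u0 * Rabs u0 + 2 * Rabs u0 - 1) <= 4).
      { intro Ha. unfold hstar in Hh. destruct (Rlt_dec 1 (Rabs u0)); [|lra].
        assert (Hd : 0 < u0 ^ 2 + 2 * Rabs u0 - 1) by (pose proof (Rabs_pos u0); nra).
        assert (Eu : u0^2 = Rabs u0 * Rabs u0) by (rewrite <- Rabs_mult, <- (Rabs_right (u0^2)) by nra; f_equal; ring).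
        rewrite Eu in Hd, Hh.
        destruct Hh as [_ Hh].
        apply Rmult_le_compat_r with (r := Rabs u0 * Rabs u0 + 2 * Rabs u0 - 1) in Hh; [|lra].
        replace (4 * eps ^ 2 / (Rabs u0 * Rabs u0 + 2 * Rabs u0 - 1) * (Rabs u0 * Rabs u0 + 2 * Rabs u0 - 1))
          with (4 * eps^2) in Hh by (field; lra).
        unfold k. apply Rmult_le_reg_r with (eps^2); auto.
        replace (h / eps ^ 2 * (Rabs u0 * Rabs u0 + 2 * Rabs u0 - 1) * eps ^ 2)
          with (h * (Rabs u0 * Rabs u0 + 2 * Rabs u0 - 1)) by (field; lra).
        lra. }
      destruct (Rlt_or_le 0 u0) as [Hp|Hneg].
      * rewrite Rabs_right in HA, HB by lra. rewrite sign_pos by auto.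
        apply (pos_case k u); rewrite ?Hu; auto;
          try (intros; apply HA; lra); try (intros; apply HB; lra).
      * assert (Hneg' : u0 < 0) by lra.
        rewrite Rabs_left in HA, HB by lra. rewrite sign_neg by auto.
        set (v := fun n => - u n).
        assert (Hv : forall n, G k (v n) (v (S n)) = 0).
        { intro n; unfold v; rewrite G_opp, Hg; ring. }
        assert (P : monotone_seq v /\ Un_cv v 1).
        { apply (pos_case k v); unfold v; rewrite ?Hu; auto;
          try lra; try (intros; apply HA; lra); try (intros; apply HB; lra). }
        destruct P as [M C].
        split.
           ++ destruct M as [M|M]; [right|left]; intro n; specialize (M n); unfold v in M; lra.
           ++ intros e He; destruct (C e He) as [N HN]; exists N; intros n Hn.
              specialize (HN n Hn). unfold Rdist in *.
              replace (u n - -1) with (- (- u n - 1)) by ring. rewrite Rabs_Ropp; auto.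
Qed.
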